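(* For every finite abelian group $A$, the wreath product $A\wr\mathbb{Z}=\left(\bigoplus_{i\in\mathbb{Z}}A\right)\rtimes\mathbb{Z}$ (with $\mathbb{Z}$ acting by shifting coordinates) embeds in $\mathrm{IET}$.
   Context: $\mathrm{IET}$ denotes the group of interval exchange transformations of $[0,1)$: bijections of $[0,1)$ that are orientation-preserving piecewise isometries (piecewise translations), left-continuous, with finitely many discontinuity points. *)

(* Defs.v *)
From Stdlib Require Import Reals ZArith.
From mathcomp Require Import all_boot all_algebra.
Set Implicit Arguments. Unset Strict Implicit. Unset Printing Implicit Defensive.
Import GRing.Theory.

Open Scope R_scope.

Definition in01 (x : R) : Prop := 0 <= x < 1.

(* f is an interval exchange transformation of [0,1): a bijection of [0,1)
   which is a translation on each piece [a i, a (i+1)) of a finite partition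
   0 = a 0 < a 1 < ... < a n = 1.  (Values of f outside [0,1) are ignored.) *)
Definition is_IET (f : R -> R) : Prop :=
  (forall x, in01 x -> in01 (f x)) /\
  (forall x y, in01 x -> in01 y -> f x = f y -> x = y) /\
  (forall y, in01 y -> exists x, in01 x /\ f x = y) /\
  exists (n : nat) (a t : nat -> R),
    a 0%nat = 0 /\ a n = 1 /\
    (forall i, (i < n)%nat -> a i < a (S i)) /\
    (forall i x, (i < n)%nat -> a i <= x < a (S i) -> f x = x + t i).

(* Wreath product A wr Z = (bigoplus_{i in Z} A) ⋊ Z.
   Elements: pairs (f, n) with f : Z -> A finitely supported, n : Z. *)
Definition finsupp (A : finZmodType) (f : Z -> A) : Prop :=
  exists N : Z, forall i : Z, Z.lt N (Z.abs i) -> f i = 0%R.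

(* Z acts by shifting coordinates: (n . g) i = g (i - n). *)
Definition wr_mul (A : finZmodType) (x y : (Z -> A) * Z) : (Z -> A) * Z :=
  (fun i => (x.1 i + y.1 (Z.sub i x.2))%R, Z.add x.2 y.2).

(* Main.v *)
Require Import Defs.
From Stdlib Require Import Reals ZArith Lra Lia ClassicalEpsilon List Classical.
From mathcomp Require Import all_boot all_algebra zify.
Set Implicit Arguments. Unset Strict Implicit. Unset Printing Implicit Defensive.
Import GRing.Theory.
Open Scope R_scope.

Definition fl (u : R) : Z := Z.sub (up u) 1.
Definition fr (u : R) : R := u - IZR (fl u).

Lemma fl_spec u : IZR (fl u) <= u < IZR (fl u) + 1.
Proof. unfold fl; rewrite minus_IZR; destruct (archimed u); lra. Qed.

Lemma fl_unique u z : IZR z <= u < IZR z + 1 -> fl u = z.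
Proof.
  intros [H1 H2]; unfold fl.
  assert (up u = Z.add z 1).
  { symmetry; apply tech_up; rewrite plus_IZR; lra. }
  lia.
Qed.

Lemma frac_range u : 0 <= fr u < 1.
Proof. unfold fr; destruct (fl_spec u); lra. Qed.

Lemma frac_eq u z m : 0 <= z < 1 -> u - z = IZR m -> fr u = z.
Proof.
  intros Hz Hm. unfold fr. rewrite (fl_unique (z := m)). lra. lra.
Qed.

Lemma frac_id u : 0 <= u < 1 -> fr u = u.
Proof. intros H; apply (frac_eq (m := Z0)); auto; simpl; lra. Qed.

Lemma frac_shift u m : fr (u + IZR m) = fr u.
Proof.
  apply (frac_eq (m := Z.add (fl u) m)). apply frac_range.
  unfold fr; rewrite plus_IZR; lra.
Qed.

Lemma frac_congr u v m : u - v = IZR m -> fr u = fr v.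
Proof.
  intros H. replace u with (v + IZR m) by lra. apply frac_shift.
Qed.

Lemma frac_diff u : exists m, u - fr u = IZR m.
Proof. exists (fl u); unfold fr; lra. Qed.

Definition alpha : R := sqrt 2.

Lemma irr_nat (M P : nat) : (2 * M * M)%N = (P * P)%N -> M = 0%N.
Proof.
  intros H. destruct M as [|M]; first done. exfalso.
  have HP : (0 < P)%N.
  { destruct P; last done. by rewrite muln0 in H. }
  have := congr1 (logn 2) H.
  rewrite -mulnA lognM // ?muln_gt0 // lognM // lognM //.
  have -> : logn 2 2 = 1%N by [].
  move=> E. have := congr1 odd E. rewrite !oddD /=.
  by case: (odd (logn 2 M.+1)); case: (odd (logn 2 P)).
Qed.

Lemma irr_Z (m p : Z) : Z.mul (Z.mul 2 m) m = Z.mul p p -> m = Z0.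
Proof.
  intros H.
  have H2 : (2 * Z.abs_nat m * Z.abs_nat m)%N = (Z.abs_nat p * Z.abs_nat p)%N.
  { apply Nat2Z.inj. rewrite -!multE !Nat2Z.inj_mul !Zabs2Nat.id_abs. nia. }
  have := irr_nat H2. lia.
Qed.

Lemma alpha_irr (m p : Z) : IZR m * alpha = IZR p -> m = Z0.
Proof.
  intros H. apply (irr_Z (p:=p)). apply eq_IZR. rewrite !mult_IZR.
  rewrite <- H. unfold alpha.
  replace (IZR m * sqrt 2 * (IZR m * sqrt 2)) with (IZR m * IZR m * (sqrt 2 * sqrt 2)) by ring.
  rewrite sqrt_sqrt; lra.
Qed.

Lemma L1 c x1 x2 : 0 <= x1 -> x1 < x2 -> x2 < 1 ->
  ~ (x1 < fr (Ropp c) <= x2) -> fr (x2 + c) = fr (x1 + c) + (x2 - x1).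
Proof.
  intros H0 H1 H2 Hn.
  destruct (frac_diff (x1 + c)) as [m Hm].
  have Hp := frac_range (x1 + c).
  destruct (Rlt_dec (fr (x1 + c) + (x2 - x1)) 1) as [Hl|Hl].
  - apply (frac_eq (m := m)); lra.
  - exfalso; apply Hn.
    have -> : fr (Ropp c) = x1 + 1 - fr (x1 + c).
    { apply (frac_eq (m := Z.opp (Z.add m 1))). lra.
      rewrite opp_IZR plus_IZR; simpl; lra. }
    lra.
Qed.

Lemma L2 c x1 x2 : 0 <= x1 -> x1 < x2 -> x2 < 1 ->
  ~ (x1 < fr (Ropp c) <= x2) -> ~ (x1 < fr (1/2 - c) <= x2) ->
  (fr (x2 + c) < 1/2 <-> fr (x1 + c) < 1/2).
Proof.
  intros H0 H1 H2 Hn Hn2.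
  rewrite (L1 H0 H1 H2 Hn).
  destruct (frac_diff (x1 + c)) as [m Hm].
  have Hp := frac_range (x1 + c).
  split; intros H; [lra|].
  destruct (Rlt_dec (fr (x1 + c) + (x2 - x1)) (1/2)) as [Hl|Hl]; auto.
  exfalso; apply Hn2.
  have -> : fr (1/2 - c) = x1 + 1/2 - fr (x1 + c).
  { apply (frac_eq (m := Z.opp m)). lra. rewrite opp_IZR; lra. }
  lra.
Qed.

Section Sums.
Variable A : zmodType.

Definition SW (G : Z -> A) (lo : Z) (len : nat) : A :=
  (\sum_(t < len) G (Z.add lo (Z.of_nat t)))%R.

Lemma SW_extR G lo len : SW G lo len.+1 = (SW G lo len + G (Z.add lo (Z.of_nat len)))%R.
Proof. by rewrite /SW big_ord_recr. Qed.

Lemma SW_extL G lo len :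
  SW G (Z.sub lo 1) len.+1 = (G (Z.sub lo 1) + SW G lo len)%R.
Proof.
  rewrite /SW big_ord_recl /=. congr (_ + _)%R.
  - congr G. rewrite /= Z.add_0_r. done.
  - apply: eq_bigr => i _. congr G. rewrite add0n. change (Zpos (Pos.of_succ_nat ?n)) with (Z.of_nat (S n)). rewrite Nat2Z.inj_succ. lia.
Qed.

Lemma SW_window G lo len lo' len' :
  (forall i, Z.lt i lo \/ Z.le (Z.add lo (Z.of_nat len)) i -> G i = 0%R) ->
  Z.le lo' lo -> Z.le (Z.add lo (Z.of_nat len)) (Z.add lo' (Z.of_nat len')) ->
  SW G lo' len' = SW G lo len.
Proof.
  intros HG H1 H2.
  have ER : forall d, SW G lo (len + d) = SW G lo len.
  { elim=> [|d IH]; first by rewrite addn0.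
    rewrite addnS SW_extR IH HG ?addr0 //. right; lia. }
  have EL : forall d, SW G (Z.sub lo (Z.of_nat d)) (len + d) = SW G lo len.
  { elim=> [|d IH]; first by rewrite addn0 Z.sub_0_r.
    rewrite addnS.
    have -> : Z.sub lo (Z.of_nat d.+1) = Z.sub (Z.sub lo (Z.of_nat d)) 1 by lia.
    rewrite SW_extL IH HG ?add0r //. left; lia. }
  have E2 : forall d e, SW G (Z.sub lo (Z.of_nat d)) ((len + d) + e) = SW G lo len.
  { move=> d e. rewrite -[RHS](EL d).
    elim: e => [|e IH]; first by rewrite addn0.
    rewrite addnS SW_extR IH HG ?addr0 //. right.
    rewrite !Nat2Z.inj_add. lia. }
  set d1 := Z.to_nat (Z.sub lo lo').
  set d2 := (len' - (len + d1))%N.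
  have -> : lo' = Z.sub lo (Z.of_nat d1) by rewrite /d1; lia.
  have -> : len' = ((len + d1) + d2)%N.
  { rewrite /d2 subnKC //. apply/leP. rewrite /d1. lia. }
  apply E2.
Qed.
End Sums.

Section Model.
Variable A : finZmodType.

Definition Nf (f : Z -> A) : Z :=
  Z.abs (epsilon (inhabits Z0) (fun N => forall i, Z.lt N (Z.abs i) -> f i = 0%R)).

Lemma Nf_spec f : finsupp f -> forall i, Z.lt (Nf f) (Z.abs i) -> f i = 0%R.
Proof.
  intros Hf i Hi. unfold Nf in Hi.
  have := epsilon_spec (inhabits Z0) (fun N => forall i, Z.lt N (Z.abs i) -> f i = 0%R) Hf.
  intros H. apply H. lia.
Qed.

Lemma Nf_ge0 f : Z.le Z0 (Nf f).
Proof. unfold Nf; lia. Qed.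
Arguments Nf_ge0 : clear implicits.

Definition indZ (z : R) (i : Z) : bool :=
  if Rlt_dec (fr (z - IZR i * alpha)) (1/2) then true else false.
Definition term (f : Z -> A) (z : R) (i : Z) : A := if indZ z i then f i else 0%R.
Definition wlen (N : Z) : nat := Z.to_nat (Z.add (Z.mul 2 N) 1).
Definition LF (f : Z -> A) (z : R) : A := SW (term f z) (Z.opp (Nf f)) (wlen (Nf f)).
Definition rotZ (n : Z) (x : R) : R := fr (x + IZR n * alpha).
Definition act (g : (Z -> A) * Z) (p : R * A) : R * A :=
  (rotZ g.2 p.1, p.2 + LF g.1 (rotZ g.2 p.1))%R.

Lemma LF_window f z lo len : finsupp f -> Z.le lo (Z.opp (Nf f)) ->
  Z.le (Z.add (Nf f) 1) (Z.add lo (Z.of_nat len)) -> SW (term f z) lo len = LF f z.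
Proof.
  intros Hf H1 H2. unfold LF. have H0 := Nf_ge0 f.
  apply SW_window; unfold wlen; try lia.
  intros i Hi. unfold term. rewrite Nf_spec //; [by case: indZ | lia].
Qed.

Lemma ind_congr z z' i m : z - z' = IZR m -> indZ z i = indZ z' i.
Proof.
  intros H. unfold indZ. rewrite (@frac_congr (z - IZR i * alpha) (z' - IZR i * alpha) m) //. lra.
Qed.

Lemma rotZ_rotZ n m x : rotZ n (rotZ m x) = rotZ (Z.add n m) x.
Proof.
  unfold rotZ. destruct (frac_diff (x + IZR m * alpha)) as [k Hk].
  apply (@frac_congr _ _ (Z.opp k)). rewrite plus_IZR opp_IZR. lra.
Qed.

Lemma rotZ_range n x : 0 <= rotZ n x < 1.
Proof. apply frac_range. Qed.

Lemma act_mul g h p : finsupp g.1 -> finsupp h.1 ->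
  act (wr_mul g h) p = act g (act h p).
Proof.
  destruct g as [f n], h as [f2 m], p as [x a]. simpl. intros Hf Hf2.
  unfold act, wr_mul; simpl. rewrite !rotZ_rotZ.
  set z := rotZ (Z.add n m) x.
  set fw := fun i => (f i + f2 (Z.sub i n))%R.
  have Hfw : finsupp fw.
  { exists (Z.add (Z.add (Nf f) (Nf f2)) (Z.abs n)). intros i Hi.
    have := Nf_ge0 f. have := Nf_ge0 f2. intros. rewrite /fw !Nf_spec //; try lia. by rewrite addr0. }
  f_equal. rewrite -addrA. congr (_ + _)%R.
  set M := Z.add (Z.add (Z.add (Nf f) (Nf f2)) (Nf fw)) (Z.abs n).
  have H0 := Nf_ge0 f. have H1 := Nf_ge0 f2. have H2 := Nf_ge0 fw.
  rewrite -(@LF_window fw z (Z.opp M) (wlen M)) //; try (unfold wlen; lia).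
  rewrite -(@LF_window f z (Z.opp M) (wlen M)) //; try (unfold wlen; lia).
  rewrite -(@LF_window f2 (rotZ m x) (Z.sub (Z.opp M) n) (wlen M)) //; try (unfold wlen; lia).
  rewrite addrC /SW -big_split /=. apply: eq_bigr => t _.
  rewrite /term.
  have -> : indZ (rotZ m x) (Z.add (Z.sub (Z.opp M) n) (Z.of_nat t)) =
            indZ z (Z.add (Z.opp M) (Z.of_nat t)).
  { unfold indZ. rewrite /z /rotZ.
    destruct (frac_diff (x + IZR m * alpha)) as [k1 Hk1].
    destruct (frac_diff (x + IZR (Z.add n m) * alpha)) as [k2 Hk2].
    rewrite (@frac_congr (fr (x + IZR m * alpha) - IZR (Z.add (Z.sub (Z.opp M) n) (Z.of_nat t)) * alpha)
               (fr (x + IZR (Z.add n m) * alpha) - IZR (Z.add (Z.opp M) (Z.of_nat t)) * alpha)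
               (Z.sub k2 k1)) //.
    rewrite ?plus_IZR ?minus_IZR ?opp_IZR in Hk1 Hk2 *. lra. }
  case: indZ; last by rewrite addr0.
  rewrite /fw. congr (_ + _)%R. congr f2. lia.
Qed.

End Model.

Section Enc.
Variable A : finZmodType.

Definition kR : R := INR #|A|.
Lemma k_gt0 : (0 < #|A|)%N.
Proof. apply/card_gt0P. by exists (0%R : A). Qed.
Lemma kR_pos : 0 < kR.
Proof. unfold kR. apply lt_0_INR. have := k_gt0. lia. Qed.

Definition rk (a : A) : nat := enum_rank a.
Definition enc (p : R * A) : R := (INR (rk p.2) + p.1) / kR.
Definition blk (y : R) : nat := Z.to_nat (fl (kR * y)).
Definition dec (y : R) : R * A :=
  (fr (kR * y), enum_val (insubd (enum_rank (0%R : A)) (blk y))).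
Definition phi (g : (Z -> A) * Z) (y : R) : R := enc (act g (dec y)).

Lemma rk_lt (a : A) : INR (rk a) + 1 <= kR.
Proof.
  unfold kR. rewrite <- S_INR. apply le_INR. apply/leP. exact: ltn_ord.
Qed.

Lemma enc_range p : 0 <= p.1 < 1 -> 0 <= enc p < 1.
Proof.
  destruct p as [x a]; simpl; intros Hx. unfold enc; simpl.
  have := rk_lt a. have := pos_INR (rk a). have := kR_pos. intros Hk H1 H2.
  split.
  - apply Rmult_le_pos; [lra | left; apply Rinv_0_lt_compat; lra].
  - apply (Rmult_lt_reg_r kR); auto. unfold Rdiv. rewrite Rmult_assoc Rinv_l; lra.
Qed.

Lemma kR_enc p : kR * enc p = INR (rk p.2) + p.1.
Proof. unfold enc. have := kR_pos. intros. field. lra. Qed.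

Lemma dec_enc p : 0 <= p.1 < 1 -> dec (enc p) = p.
Proof.
  destruct p as [x a]; simpl; intros Hx. unfold dec. rewrite kR_enc /=.
  have Hfl : fl (INR (rk a) + x) = Z.of_nat (rk a).
  { apply fl_unique. rewrite <- INR_IZR_INZ. lra. }
  f_equal.
  - apply (@frac_eq _ _ (Z.of_nat (rk a))); auto. rewrite <- INR_IZR_INZ; lra.
  - rewrite /blk kR_enc /= Hfl Nat2Z.id /rk. by rewrite valKd enum_rankK.
Qed.

Lemma blk_lt y : in01 y -> (blk y < #|A|)%N /\ IZR (fl (kR * y)) = INR (blk y).
Proof.
  intros [H0 H1]. have Hk := kR_pos.
  have := fl_spec (kR * y). intros [F1 F2].
  have Hky : 0 <= kR * y < kR.
  { split. apply Rmult_le_pos; lra. rewrite <- (Rmult_1_r kR) at 2. apply Rmult_lt_compat_l; lra. }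
  have Hge : Z.le Z0 (fl (kR * y)).
  { have Hm : IZR (Zneg xH) < IZR (fl (kR * y)) by lra.
    apply lt_IZR in Hm. lia. }
  have Hlt : Z.lt (fl (kR * y)) (Z.of_nat #|A|).
  { apply lt_IZR. rewrite <- INR_IZR_INZ. unfold kR in *. lra. }
  split; unfold blk.
  - lia.
  - rewrite INR_IZR_INZ Z2Nat.id //.
Qed.

Lemma dec_range y : 0 <= (dec y).1 < 1.
Proof. apply frac_range. Qed.

Lemma enc_dec y : in01 y -> enc (dec y) = y.
Proof.
  intros Hy. have [Hb Hi] := blk_lt Hy. have Hk := kR_pos.
  unfold enc, dec; simpl. rewrite /rk enum_valK insubdK //.
  rewrite <- Hi. unfold fr. field. lra.
Qed.

Lemma phi_range g y : in01 (phi g y).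
Proof. unfold phi, in01. apply enc_range. apply rotZ_range. Qed.

Lemma phi_enc g p : 0 <= p.1 < 1 -> phi g (enc p) = enc (act g p).
Proof. intros H. by rewrite /phi dec_enc. Qed.

Lemma phi_mul g h y : finsupp g.1 -> finsupp h.1 -> in01 y ->
  phi (wr_mul g h) y = phi g (phi h y).
Proof.
  intros Hg Hh Hy. rewrite /phi act_mul // dec_enc //. apply rotZ_range.
Qed.

Lemma phi_id g y : (forall i, g.1 i = 0%R) -> g.2 = Z0 -> in01 y -> phi g y = y.
Proof.
  destruct g as [f n]; simpl; intros Hf Hn Hy; subst n.
  rewrite /phi /act /=.
  have Hr : rotZ Z0 (dec y).1 = (dec y).1.
  { unfold rotZ. rewrite Rmult_0_l Rplus_0_r. apply frac_id, dec_range. }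
  rewrite Hr. have -> : LF f (dec y).1 = 0%R.
  { rewrite /LF /SW big1 //. intros t Ht. unfold term. rewrite Hf. by destruct (indZ _ _). }
  rewrite addr0. by rewrite -surjective_pairing enc_dec.
Qed.

Definition ginv (g : (Z -> A) * Z) : (Z -> A) * Z :=
  (fun i => (- g.1 (Z.add i g.2))%R, Z.opp g.2).

Lemma ginv_fs g : finsupp g.1 -> finsupp (ginv g).1.
Proof.
  intros Hg. exists (Z.add (Nf g.1) (Z.abs g.2)). intros i Hi. simpl.
  have := @Nf_ge0 A g.1. intros. rewrite Nf_spec //; [by rewrite oppr0 | lia].
Qed.

Lemma phi_linv g y : finsupp g.1 -> in01 y -> phi (ginv g) (phi g y) = y.
Proof.
  intros Hg Hy. rewrite -phi_mul //; [|by apply ginv_fs].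
  apply phi_id; auto; simpl.
  - intros i. have -> : Z.sub i (Z.opp g.2) = Z.add i g.2 by lia. by rewrite addNr.
  - lia.
Qed.

Lemma phi_rinv g y : finsupp g.1 -> in01 y -> phi g (phi (ginv g) y) = y.
Proof.
  intros Hg Hy. rewrite -phi_mul //; [|by apply ginv_fs].
  apply phi_id; auto; simpl.
  - intros i. have -> : Z.add (Z.sub i g.2) g.2 = i by lia. by rewrite subrr.
  - lia.
Qed.

End Enc.

Lemma delta_exists (g : nat -> R) n : (forall t, (t < n)%N -> 0 < g t) ->
  exists d, 0 < d <= 1/2 /\ forall t, (t < n)%N -> d < g t.
Proof.
  elim: n => [|n IH] Hg.
  - exists (1/2). split; [lra | by []].
  - destruct IH as [d [Hd Hd2]].
    { intros t Ht. apply Hg. lia. }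
    have Hn := Hg n (ltnSn n).
    exists (Rmin d (g n / 2)). split.
    + split; [apply Rmin_glb_lt; lra | have := Rmin_l d (g n / 2); lra].
    + intros t Ht. have R1 := Rmin_l d (g n / 2). have R2 := Rmin_r d (g n / 2).
      case: (ltngtP t n) => H.
      * have := Hd2 t H. lra.
      * exfalso. lia.
      * subst t. lra.
Qed.

Section Inj.
Variable A : finZmodType.

Lemma jump (d : Z -> A) N i0 : Z.le Z0 N -> Z.le (Z.abs i0) N ->
  (forall z, SW (term d z) (Z.opp N) (wlen N) = 0%R) -> d i0 = 0%R.
Proof.
  intros HN Hi0 HS.
  set z0 := fr (IZR i0 * alpha).
  destruct (frac_diff (IZR i0 * alpha)) as [k0 Hk0]. fold z0 in Hk0.
  set t0 := Z.to_nat (Z.add i0 N).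
  have Ht0 : (t0 < wlen N)%N by rewrite /t0 /wlen; lia.
  set u := fun t : nat => fr (z0 - IZR (Z.add (Z.opp N) (Z.of_nat t)) * alpha).
  set g := fun t : nat => if t == t0 then 1 else Rmin (u t) (Rabs (u t - 1/2)).
  have Hpos : forall t, (t < wlen N)%N -> 0 < g t.
  { intros t Ht. rewrite /g. case: eqP => Htt; first lra.
    set i := Z.add (Z.opp N) (Z.of_nat t).
    have Hii : i <> i0 by intros E; apply Htt; rewrite /t0 -E /i; lia.
    destruct (frac_diff (z0 - IZR i * alpha)) as [m Hm].
    have Hu := frac_range (z0 - IZR i * alpha). fold i in Hm, Hu.
    rewrite /u. fold i.
    have Hne0 : fr (z0 - IZR i * alpha) <> 0.
    { intros E. apply Hii. symmetry. apply Z.sub_move_0_r.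
      apply (@alpha_irr _ (Z.add m k0)). rewrite minus_IZR plus_IZR. lra. }
    have Hne1 : fr (z0 - IZR i * alpha) <> 1/2.
    { intros E. apply Hii. symmetry. apply Z.sub_move_0_r.
      have : Z.mul 2 (Z.sub i0 i) = Z0.
      { apply (@alpha_irr _ (Z.add (Z.mul 2 (Z.add m k0)) 1)).
        rewrite mult_IZR minus_IZR plus_IZR mult_IZR plus_IZR. lra. }
      lia. }
    apply Rmin_glb_lt; [lra|]. apply Rabs_pos_lt. lra. }
  destruct (delta_exists Hpos) as [dl [Hdl Hdg]].
  set z1 := z0 - dl.
  have E0 := HS z0. have E1 := HS z1.
  have : (SW (term d z0) (Z.opp N) (wlen N) - SW (term d z1) (Z.opp N) (wlen N) = 0)%R
    by rewrite E0 E1 subrr.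
  rewrite /SW -sumrB (bigD1 (Ordinal Ht0)) //= big1.
  - have -> : Z.add (Z.opp N) (Z.of_nat t0) = i0 by rewrite /t0; lia.
    rewrite /term.
    have -> : indZ z0 i0 = true.
    { rewrite /indZ. have -> : fr (z0 - IZR i0 * alpha) = 0.
      { apply (@frac_eq _ _ (Z.opp k0)). lra. rewrite opp_IZR. lra. }
      by destruct Rlt_dec; [|lra]. }
    have -> : indZ z1 i0 = false.
    { rewrite /indZ. have -> : fr (z1 - IZR i0 * alpha) = 1 - dl.
      { apply (@frac_eq _ _ (Z.sub (Z.opp k0) 1)). lra. rewrite minus_IZR opp_IZR /z1. lra. }
      by destruct Rlt_dec; [lra|]. }
    by rewrite subr0 addr0.
  - move=> t /negP Ht. rewrite /term.
    have Htt : nat_of_ord t <> t0.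
    { intros E. apply Ht. apply/eqP. by apply val_inj. }
    have Hg := Hdg t (ltn_ord t). rewrite /g in Hg.
    move: Hg. case: eqP => // _ Hg.
    set i := Z.add (Z.opp N) (Z.of_nat t). fold i in Hg.
    have := Rmin_l (u t) (Rabs (u t - 1/2)). have := Rmin_r (u t) (Rabs (u t - 1/2)).
    rewrite /u. fold i. intros Hr1 Hr2. rewrite /u in Hg. fold i in Hg.
    destruct (frac_diff (z0 - IZR i * alpha)) as [m Hm].
    have Hu := frac_range (z0 - IZR i * alpha).
    have -> : indZ z1 i = indZ z0 i.
    { rewrite /indZ. have -> : fr (z1 - IZR i * alpha) = fr (z0 - IZR i * alpha) - dl.
      { apply (@frac_eq _ _ m). lra. rewrite /z1. lra. }
      move: Hr1 Hr2 Hg. set v := fr (z0 - IZR i * alpha). intros Hr1 Hr2 Hg.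
      have Hd1 : dl < v by lra. have Hd2 : dl < Rabs (v - 1/2) by lra.
      destruct (Rle_or_lt (1/2) v) as [Hv|Hv].
      - rewrite Rabs_right in Hd2; [|lra].
        destruct Rlt_dec; destruct Rlt_dec; auto; lra.
      - rewrite Rabs_left in Hd2; [|lra].
        destruct Rlt_dec; destruct Rlt_dec; auto; lra. }
    by rewrite subrr.
Qed.

End Inj.

Section Inj2.
Variable A : finZmodType.

Lemma LF_congr (f : Z -> A) z z' k : z - z' = IZR k -> LF f z = LF f z'.
Proof.
  intros H. rewrite /LF /SW. apply: eq_bigr => t _. rewrite /term.
  by rewrite (@ind_congr z z' _ k).
Qed.

Lemma phi_inj (g h : (Z -> A) * Z) : finsupp g.1 -> finsupp h.1 ->
  (forall x, in01 x -> phi g x = phi h x) -> (forall i, g.1 i = h.1 i) /\ g.2 = h.2.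
Proof.
  destruct g as [f n], h as [f2 m]; simpl. intros Hf Hf2 H.
  have Hact : forall x a, 0 <= x < 1 -> act (f, n) (x, a) = act (f2, m) (x, a).
  { intros x a Hx. have Hr := H (enc (x, a)) (enc_range (p := (x, a)) Hx).
    rewrite !phi_enc // in Hr.
    have := congr1 (@dec A) Hr. rewrite !dec_enc //; apply rotZ_range. }
  have Hnm : n = m.
  { have := congr1 fst (Hact 0 0%R (conj (Rle_refl 0) Rlt_0_1)). simpl. rewrite /rotZ.
    destruct (frac_diff (0 + IZR n * alpha)) as [k1 Hk1].
    destruct (frac_diff (0 + IZR m * alpha)) as [k2 Hk2]. intros E.
    have := @alpha_irr (Z.sub n m) (Z.sub k1 k2). rewrite !minus_IZR.
    intros HH. have : Z.sub n m = Z0 by apply HH; lra. lia. }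
  subst m. split; auto. intros i0.
  have HL : forall z, LF f z = LF f2 z.
  { intros z. destruct (frac_diff z) as [k Hk].
    rewrite (@LF_congr f z (fr z) k) // (@LF_congr f2 z (fr z) k) //.
    have Hz := frac_range z.
    set x := rotZ (Z.opp n) (fr z).
    have Hx : rotZ n x = fr z.
    { rewrite /x rotZ_rotZ. have -> : Z.add n (Z.opp n) = Z0 by lia.
      rewrite /rotZ Rmult_0_l Rplus_0_r. by apply frac_id. }
    have := congr1 snd (Hact x 0%R (rotZ_range _ _)). simpl. rewrite Hx.
    by rewrite !add0r. }
  set M := Z.add (Z.add (Nf f) (Nf f2)) (Z.abs i0).
  have H0 := @Nf_ge0 A f. have H1 := @Nf_ge0 A f2.
  have := @jump A (fun i => f i - f2 i)%R M i0 ltac:(lia) ltac:(lia).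
  intros HJ. apply/eqP. rewrite -subr_eq0. apply/eqP. apply HJ.
  intros z.
  have -> : SW (term (fun i => f i - f2 i)%R z) (Z.opp M) (wlen M) =
            (SW (term f z) (Z.opp M) (wlen M) - SW (term f2 z) (Z.opp M) (wlen M))%R.
  { rewrite /SW -sumrB. apply: eq_bigr => t _. rewrite /term.
    by destruct (indZ _ _); rewrite ?subrr. }
  rewrite (@LF_window A f z) //; try (unfold wlen; lia).
  rewrite (@LF_window A f2 z) //; try (unfold wlen; lia).
  by rewrite HL subrr.
Qed.
End Inj2.

Lemma incr_mono (a : nat -> R) n : (forall i, (i < n)%nat -> a i < a (S i)) ->
  forall i j, (i <= j)%nat -> (j <= n)%nat -> a i <= a j.
Proof.
  intros Ha i j Hij. elim: j Hij => [|j IH] Hij Hjn.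
  - have -> : i = 0%N by lia. lra.
  - case: (ltnP i j.+1) => H.
    + have := IH ltac:(lia) ltac:(lia). have := Ha j ltac:(lia). lra.
    + have -> : i = j.+1 by lia. lra.
Qed.

Lemma partition_exists (B : list R) : exists n (a : nat -> R),
  a 0%N = 0 /\ a n = 1 /\ (forall i, (i < n)%nat -> a i < a (S i)) /\
  (forall b i, In b B -> (i < n)%nat -> ~ (a i < b < a (S i))).
Proof.
  induction B as [|b B IH].
  - exists 1%N, (fun i => if i is 0%N then 0 else 1). split; [done|split; [done|split]].
    + intros i Hi. have -> : i = 0%N by lia. lra.
    + intros b i [].
  - destruct IH as [n [a [Ha0 [Han [Hinc Hb]]]]].
    have Hmono := incr_mono Hinc.
    destruct (classic (exists i, (i < n)%nat /\ a i < b < a (S i))) as [[i [Hi Hab]]|Hno].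
    + set a' := fun m => if (m <= i)%N then a m else if m == i.+1 then b else a (m.-1).
      exists n.+1, a'. split; [|split; [|split]].
      * by rewrite /a' /=.
      * rewrite /a' /=. have -> : (n.+1 <= i)%N = false by lia.
        have -> : (n.+1 == i.+1) = false by apply/eqP; lia. done.
      * intros m Hm. rewrite /a' /=.
        have [H|[H|H]] : (m < i \/ i < m \/ m = i)%coq_nat by lia.
        -- have -> : (m <= i)%N = true by lia. have -> : (m.+1 <= i)%N = true by lia.
           apply Hinc; lia.
        -- have -> : (m <= i)%N = false by lia. have -> : (m.+1 <= i)%N = false by lia.
           have -> : (m.+1 == i.+1) = false by apply/eqP; lia.
           case: eqP => E.
           ++ subst m. simpl. lra.
           ++ simpl. have := Hinc m.-1 ltac:(lia).
              have -> : (m.-1).+1 = m by lia. lra.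
        -- subst m. rewrite leqnn. have -> : (i.+1 <= i)%N = false by lia.
           rewrite eqxx. lra.
      * intros b' j Hb' Hj. rewrite /a' /=.
        have Hai : forall m, (m <= i)%N -> a m <= a i by intros; apply Hmono; lia.
        have Hai1 : forall m, (i.+1 <= m)%N -> (m <= n)%N -> a i.+1 <= a m by intros; apply Hmono; lia.
        destruct Hb' as [<-|Hb'].
        -- have [H|[H|H]] : (j < i \/ i < j \/ j = i)%coq_nat by lia.
           ++ have -> : (j <= i)%N = true by lia. have -> : (j.+1 <= i)%N = true by lia.
              have := Hai j.+1 ltac:(lia). lra.
           ++ have -> : (j <= i)%N = false by lia. have -> : (j.+1 <= i)%N = false by lia.
              have -> : (j.+1 == i.+1) = false by apply/eqP; lia.
              case: eqP => E.
              ** subst j. lra.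
              ** have := Hai1 j.-1 ltac:(lia) ltac:(lia). lra.
           ++ subst j. rewrite leqnn. have -> : (i.+1 <= i)%N = false by lia. rewrite eqxx. lra.
        -- have Hbb := Hb b'.
          have [H|[H|H]] : (j < i \/ i < j \/ j = i)%coq_nat by lia.
           ++ have -> : (j <= i)%N = true by lia. have -> : (j.+1 <= i)%N = true by lia.
              apply Hbb; auto; lia.
           ++ have -> : (j <= i)%N = false by lia. have -> : (j.+1 <= i)%N = false by lia.
              have -> : (j.+1 == i.+1) = false by apply/eqP; lia.
              case: eqP => E.
              ** subst j. intros Hc. apply (Hbb i Hb' Hi). lra.
              ** simpl. have := Hbb j.-1 Hb' ltac:(lia).
                 have -> : (j.-1).+1 = j by lia. done.
           ++ subst j. rewrite leqnn. have -> : (i.+1 <= i)%N = false by lia. rewrite eqxx.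
              intros Hc. apply (Hbb i Hb' Hi). lra.
    + exists n, a. split; [done|split; [done|split; [done|]]].
      intros b' j [<-|Hb'] Hj.
      * intros Hc. apply Hno. exists j. auto.
      * by apply Hb.
Qed.

Definition PT (f : R -> R) (B : list R) : Prop :=
  forall x y, 0 <= x -> x < y -> y < 1 -> (forall b, In b B -> ~ (x < b <= y)) ->
  f y - f x = y - x.

Lemma PT_IET (f : R -> R) (B : list R) :
  (forall x, in01 x -> in01 (f x)) ->
  (forall x y, in01 x -> in01 y -> f x = f y -> x = y) ->
  (forall y, in01 y -> exists x, in01 x /\ f x = y) ->
  PT f B -> is_IET f.
Proof.
  intros H1 H2 H3 HP. split; [done|split; [done|split; [done|]]].
  destruct (partition_exists B) as [n [a [Ha0 [Han [Hinc Hb]]]]].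
  have Hmono := incr_mono Hinc.
  exists n, a, (fun i => f (a i) - a i). split; [done|split; [done|split; [done|]]].
  intros i x Hi [Hx1 Hx2].
  have Hai : 0 <= a i by rewrite -Ha0; apply Hmono; lia.
  have Hai1 : a (S i) <= 1 by rewrite -Han; apply Hmono; lia.
  destruct (Rle_lt_or_eq_dec _ _ Hx1) as [Hlt|Heq].
  - have := HP (a i) x Hai Hlt ltac:(lra).
    have : forall b, In b B -> ~ (a i < b <= x).
    { intros b Hb' Hc. apply (Hb b i Hb' Hi). lra. }
    intros Hnb Heq. have := Heq Hnb. lra.
  - subst x. lra.
Qed.

Section PTphi.
Variable A : finZmodType.

Definition cc (f : Z -> A) (n : Z) (t : nat) : R :=
  IZR n * alpha - IZR (Z.add (Z.opp (Nf f)) (Z.of_nat t)) * alpha.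
Definition Ulist (f : Z -> A) (n : Z) : list R :=
  0 :: fr (Ropp (IZR n * alpha)) ::
  flat_map (fun t => fr (Ropp (cc f n t)) :: fr (1/2 - cc f n t) :: nil) (List.seq 0 (wlen (Nf f))).
Definition Blist (f : Z -> A) (n : Z) : list R :=
  flat_map (fun j => map (fun u => (INR j + u) / kR A) (Ulist f n)) (List.seq 0 #|A|).

Lemma Bmem f n j u : (j < #|A|)%N -> In u (Ulist f n) -> In ((INR j + u) / kR A) (Blist f n).
Proof.
  intros Hj Hu. unfold Blist. apply in_flat_map. exists j. split.
  - apply in_seq. lia.
  - apply in_map_iff. exists u. split; auto.
Qed.

Lemma phi_PT (g : (Z -> A) * Z) : finsupp g.1 -> PT (phi g) (Blist g.1 g.2).
Proof.
  destruct g as [f n]; simpl. intros Hf y1 y2 H0 H12 H2 Hnb.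
  have Hy1 : in01 y1 by (unfold in01; lra).
  have Hy2 : in01 y2 by (unfold in01; lra).
  have [Hb1 Hi1] := @blk_lt A _ Hy1. have [Hb2 Hi2] := @blk_lt A _ Hy2.
  have Hk := @kR_pos A.
  have F1 := fl_spec (kR A * y1). have F2 := fl_spec (kR A * y2).
  rewrite Hi1 in F1. rewrite Hi2 in F2.
  have Hky : kR A * y1 < kR A * y2 by apply Rmult_lt_compat_l.
  have Hj : blk A y1 = blk A y2.
  { have [H|[H|H]] : (blk A y1 < blk A y2 \/ blk A y2 < blk A y1 \/ blk A y1 = blk A y2)%coq_nat by lia.
    - exfalso. apply (Hnb ((INR (blk A y2) + 0) / kR A)).
      + apply Bmem; auto. simpl; auto.
      + have HH : INR (S (blk A y1)) <= INR (blk A y2) by apply le_INR; lia.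
        rewrite S_INR in HH.
        split.
        * apply (Rmult_lt_reg_l (kR A)); auto. replace (kR A * ((INR (blk A y2) + 0) / kR A)) with (INR (blk A y2)) by (field; lra). lra.
        * apply (Rmult_le_reg_l (kR A)); auto. replace (kR A * ((INR (blk A y2) + 0) / kR A)) with (INR (blk A y2)) by (field; lra). lra.
    - exfalso. have HH : INR (S (blk A y2)) <= INR (blk A y1) by apply le_INR; lia.
      rewrite S_INR in HH. lra.
    - done. }
  set j := blk A y1.
  have HX1 : fr (kR A * y1) = kR A * y1 - INR j by rewrite /fr Hi1.
  have HX2 : fr (kR A * y2) = kR A * y2 - INR j by rewrite /fr /j Hj Hi2.
  have Hu : forall u, In u (Ulist f n) -> ~ (fr (kR A * y1) < u <= fr (kR A * y2)).
  { intros u Hu Hc. apply (Hnb ((INR j + u) / kR A)).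
    - apply Bmem; auto.
    - rewrite HX1 HX2 in Hc. split.
      * apply (Rmult_lt_reg_l (kR A)); auto. replace (kR A * ((INR j + u) / kR A)) with (INR j + u) by (field; lra). lra.
      * apply (Rmult_le_reg_l (kR A)); auto. replace (kR A * ((INR j + u) / kR A)) with (INR j + u) by (field; lra). lra. }
  unfold phi, act, dec; simpl. rewrite -/j -Hj -/j.
  set a := enum_val _.
  set X1 := fr (kR A * y1). set X2 := fr (kR A * y2).
  fold X1 X2 in Hu.
  have HX0 : 0 <= X1 by apply frac_range.
  have HX12 : X1 < X2 by rewrite /X1 /X2 HX1 HX2; lra.
  have HX3 : X2 < 1 by apply frac_range.
  have Hrot : rotZ n X2 = rotZ n X1 + (X2 - X1).
  { apply L1; auto. apply Hu. simpl; auto. }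
  have HLF : LF f (rotZ n X2) = LF f (rotZ n X1).
  { rewrite /LF /SW. apply: eq_bigr => t _. rewrite /term /indZ.
    have Ht : In (nat_of_ord t) (List.seq 0 (wlen (Nf f))) by apply in_seq; have := ltn_ord t; lia.
    have E : forall X, fr (rotZ n X - IZR (Z.add (Z.opp (Nf f)) (Z.of_nat t)) * alpha) = fr (X + cc f n t).
    { intros X. rewrite /rotZ /cc. destruct (frac_diff (X + IZR n * alpha)) as [k Hk0].
      apply (@frac_congr _ _ (Z.opp k)). rewrite opp_IZR. lra. }
    rewrite !E.
    have HL2 := @L2 (cc f n t) X1 X2 HX0 HX12 HX3.
    have Hin1 : In (fr (Ropp (cc f n t))) (Ulist f n).
    { simpl. right; right. apply in_flat_map. exists (nat_of_ord t). simpl; auto. }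
    have Hin2 : In (fr (1/2 - cc f n t)) (Ulist f n).
    { simpl. right; right. apply in_flat_map. exists (nat_of_ord t). simpl; auto. }
    specialize (HL2 (Hu _ Hin1) (Hu _ Hin2)).
    destruct Rlt_dec; destruct Rlt_dec; try reflexivity; exfalso; tauto. }
  rewrite HLF /enc /= Hrot.
  have : X2 - X1 = kR A * (y2 - y1) by rewrite /X1 /X2 HX1 HX2; ring.
  intros ->. field. lra.
Qed.

End PTphi.

Theorem mainTheorem5 :
  forall A : finZmodType,
  exists phi : (Z -> A) * Z -> (R -> R),
    (forall g, finsupp g.1 -> is_IET (phi g)) /\
    (forall g h, finsupp g.1 -> finsupp h.1 ->
       forall x, in01 x -> phi (wr_mul g h) x = phi g (phi h x)) /\
    (forall g h, finsupp g.1 -> finsupp h.1 ->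
       (forall x, in01 x -> phi g x = phi h x) ->
       (forall i, g.1 i = h.1 i) /\ g.2 = h.2).
Proof.
  intros A. exists (@phi A). split; [|split].
  - intros g Hg. apply (@PT_IET (phi g) (Blist g.1 g.2)).
    + intros x _; apply phi_range.
    + intros x y Hx Hy E. by rewrite -(phi_linv Hg Hx) -(phi_linv Hg Hy) E.
    + intros y Hy. exists (phi (ginv g) y). split; [apply phi_range | by apply phi_rinv].
    + by apply phi_PT.
  - intros g h Hg Hh x Hx. by apply phi_mul.
  - intros g h Hg Hh H. by apply phi_inj.
Qed.
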